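(* For every message $M$ and formulas $\phi,\psi$: $\vdash(\langle M\rangle\phi\to[M]\psi)\to[M](\phi\to\psi)$.
   Context: Fix a finite set $\mathcal{A}$ of agent names containing a distinguished name $\mathsf{CM}$. Messages: $M ::= a \mid B \mid (M,M)$ ($a\in\mathcal{A}$, $B$ optional data constants, pairs). $\mathcal{P}$ is a denumerable set of propositional variables containing atoms $\mathsf{k}_a(M)$ (''$a$ knows $M$''). Formulas: $\phi ::= P \mid \phi\wedge\phi \mid \phi\vee\phi \mid \neg\phi \mid \phi\to\phi \mid [M]\phi$. Abbreviations: $\mathrm{true}:=\mathsf{k}_{\mathsf{CM}}(\mathsf{CM})$, $\mathrm{false}:=\neg\mathrm{true}$, $\phi\leftrightarrow\psi:=(\phi\to\psi)\wedge(\psi\to\phi)$, $\langle M\rangle\phi:=\neg\neg(\mathsf{k}_{\mathsf{CM}}(M)\wedge\phi)$. LIiP is the smallest set of formulas containing all instances of: the axioms of an adequate Hilbert axiomatization of intuitionistic propositional logic; $\mathsf{k}_a(a)$; $(\mathsf{k}_a(M)\wedge\mathsf{k}_a(M'))\leftrightarrow\mathsf{k}_a((M,M'))$; $[M]\mathsf{k}_{\mathsf{CM}}(M)$; $[M](\phi\to\psi)\to([M]\phi\to[M]\psi)$; $[M]\phi\to(\mathsf{k}_{\mathsf{CM}}(M)\to\phi)$; $[M]\phi\to\langle M\rangle\phi$; $\phi\to[M]\phi$; and closed under modus ponens and the rule: if $\mathsf{k}_{\mathsf{CM}}(M)\to\mathsf{k}_{\mathsf{CM}}(M')$ is in the set then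 so is $[M']\phi\to[M]\phi$ for every $\phi$. Write $\vdash\phi$ for $\phi\in\mathrm{LIiP}$. *)

(* Defs.v *)
From Stdlib Require Import FinFun.
Set Implicit Arguments.

Section LIiP.
Variable Agent : Type.   (* finite set of agent names (finiteness assumed in the theorem) *)
Variable Data : Type.
Variable CM : Agent.

Inductive msg : Type :=
| MAgent : Agent -> msg
| MData : Data -> msg
| MPair : msg -> msg -> msg.

Inductive pvar : Type :=
| PK : Agent -> msg -> pvar
| POther : nat -> pvar.

Inductive form : Type :=
| FVar : pvar -> form
| FAnd : form -> form -> form
| FOr : form -> form -> form
| FNot : form -> form
| FImp : form -> form -> form
| FBox : msg -> form -> form.

Definition fk (a : Agent) (M : msg) : form := FVar (PK a M).
Definition ftrue : form := fk CM (MAgent CM).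
Definition ffalse : form := FNot ftrue.
Definition fiff (p q : form) : form := FAnd (FImp p q) (FImp q p).
Definition fdia (M : msg) (p : form) : form := FNot (FNot (FAnd (fk CM M) p)).

(* Intuitionistic propositional logic is given
   by the standard Hilbert axiomatization with primitive negation (Kleene). *)
Inductive LIiP : form -> Prop :=
| ax_K : forall p q, LIiP (FImp p (FImp q p))
| ax_S : forall p q r,
    LIiP (FImp (FImp p (FImp q r)) (FImp (FImp p q) (FImp p r)))
| ax_andE1 : forall p q, LIiP (FImp (FAnd p q) p)
| ax_andE2 : forall p q, LIiP (FImp (FAnd p q) q)
| ax_andI : forall p q, LIiP (FImp p (FImp q (FAnd p q)))
| ax_orI1 : forall p q, LIiP (FImp p (FOr p q))
| ax_orI2 : forall p q, LIiP (FImp q (FOr p q))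
| ax_orE : forall p q r,
    LIiP (FImp (FImp p r) (FImp (FImp q r) (FImp (FOr p q) r)))
| ax_notI : forall p q,
    LIiP (FImp (FImp p q) (FImp (FImp p (FNot q)) (FNot p)))
| ax_notE : forall p q, LIiP (FImp (FNot p) (FImp p q))
| ax_kself : forall a, LIiP (fk a (MAgent a))
| ax_kpair : forall a M M',
    LIiP (fiff (FAnd (fk a M) (fk a M')) (fk a (MPair M M')))
| ax_boxk : forall M, LIiP (FBox M (fk CM M))
| ax_boxK : forall M p q,
    LIiP (FImp (FBox M (FImp p q)) (FImp (FBox M p) (FBox M q)))
| ax_boxT : forall M p, LIiP (FImp (FBox M p) (FImp (fk CM M) p))
| ax_boxdia : forall M p, LIiP (FImp (FBox M p) (fdia M p))
| ax_persist : forall M p, LIiP (FImp p (FBox M p))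
| r_MP : forall p q, LIiP (FImp p q) -> LIiP p -> LIiP q
| r_mono : forall M M' p,
    LIiP (FImp (fk CM M) (fk CM M')) -> LIiP (FImp (FBox M' p) (FBox M p)).

End LIiP.

(* Main.v *)
Require Import Defs.
From Stdlib Require Import FinFun List.
Import ListNotations.

Section Aux.
Variables (Agent Data : Type) (CM : Agent).
Notation F := (form Agent Data).

Inductive Der (G : list F) : F -> Prop :=
| Dhyp : forall p, In p G -> Der G p
| Dax : forall p, LIiP CM p -> Der G p
| Dmp : forall p q, Der G (FImp p q) -> Der G p -> Der G q.

Lemma LI_id (p : F) : LIiP CM (FImp p p).
Proof.
  eapply r_MP. eapply r_MP. apply (ax_S CM p (FImp p p) p).
  apply ax_K. apply (ax_K CM p p).
Qed.

Lemma ded G a p : Der (a :: G) p -> Der G (FImp a p).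
Proof.
  induction 1 as [p Hin|p Hax|p q _ IH1 _ IH2].
  - destruct Hin as [<-|Hin]. apply Dax, LI_id.
    eapply Dmp. apply Dax, ax_K. now apply Dhyp.
  - eapply Dmp. apply Dax, ax_K. now apply Dax.
  - eapply Dmp. eapply Dmp. apply Dax, ax_S. exact IH1. exact IH2.
Qed.

Lemma der_nil p : Der [] p -> LIiP CM p.
Proof.
  induction 1 as [p Hin|p Hax|p q _ IH1 _ IH2]; [destruct Hin|exact Hax|].
  eapply r_MP; eauto.
Qed.

Lemma dnn G x : Der G x -> Der G (FNot (FNot x)).
Proof.
  intro Hx. eapply Dmp. eapply Dmp. apply Dax, (ax_notI CM (FNot x) x).
  eapply Dmp. apply Dax, ax_K. exact Hx.
  apply Dax, LI_id.
Qed.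
End Aux.

Theorem theorem2p46 (Agent Data : Type) (CM : Agent) (HfinA : Finite Agent)
  (M : msg Agent Data) (phi psi : form Agent Data) :
  LIiP CM (FImp (FImp (fdia CM M phi) (FBox M psi)) (FBox M (FImp phi psi))).
Proof.
  apply (@der_nil _ _ CM). apply ded.
  set (H := FImp (fdia CM M phi) (FBox M psi)).
  assert (Hc : @Der _ _ CM [H] (FImp (fk CM M) (FImp phi psi))).
  { apply ded, ded.
    assert (Hk : @Der _ _ CM [phi; fk CM M; H] (fk CM M)) by (apply Dhyp; simpl; auto).
    assert (Hp : @Der _ _ CM [phi; fk CM M; H] phi) by (apply Dhyp; simpl; auto).
    assert (Hkp : @Der _ _ CM [phi; fk CM M; H] (FAnd (fk CM M) phi)).
    { eapply Dmp. eapply Dmp. apply Dax, ax_andI. exact Hk. exact Hp. }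
    assert (Hb : @Der _ _ CM [phi; fk CM M; H] (FBox M psi)).
    { apply (@Dmp _ _ CM _ (fdia CM M phi)). apply Dhyp; simpl; auto. now apply dnn. }
    eapply Dmp. eapply Dmp. apply Dax, ax_boxT. exact Hb. exact Hk. }
  eapply Dmp. eapply Dmp. apply Dax, ax_boxK.
  eapply Dmp. apply Dax, ax_persist. exact Hc.
  apply Dax, ax_boxk.
Qed.
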